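(* Assume $\rho_\alpha^{\mathrm{dir}}<1$, let $\theta^\star$ be the unique projected Bellman fixed point, and let $x_k:=\theta_k-\theta^\star$. Fix $\varepsilon>0$ with $\beta_\varepsilon:=\rho_\alpha^{\mathrm{dir}}+\varepsilon<1$, and let $p_\varepsilon$ and $C_\varepsilon$ be as described in the context. Then for every $k\ge0$, \[ \mathbb E[p_\varepsilon(w_k)\mid\mathcal F_k]\le2\sqrt{C_\varepsilon}\,\phi_{\max}\big(R_{\max}+(1+\gamma)\|\Phi\theta^\star\|_\infty\big)+2\sqrt{C_\varepsilon}(1+\gamma)\phi_{\max}^2\,p_\varepsilon(x_k). \]
   Context: Consider a finite discounted MDP with state space $\mathcal S=\{1,\dots,|\mathcal S|\}$, action space $\mathcal A=\{1,\dots,|\mathcal A|\}$, transition probabilities $P(s'\mid s,a)$, real rewards $r(s,a,s')$, expected reward $R(s,a)=\sum_{s'}P(s'\mid s,a)r(s,a,s')$, and discount factor $\gamma\in(0,1)$. Let $R_{\max}:=\max|r(s,a,s')|$. State-action vectors are ordered as $(1,1),(2,1),\dots,(|\mathcal S|,1),(1,2),\dots$. The matrix $P$ has rows $P(\cdot\mid s,a)$, and $R$ has entries $R(s,a)$. The set $\Theta$ is the set of deterministic stationary policies $\pi:\mathcal S\to\mathcal A$. For $\pi\in\Theta$, $\Pi^\pi$ has entry $1$ at row $s$, column $(s,\pi(s))$, and zeros elsewhere. The feature matrix $\Phi$ has full column rank and rows $\phi(s,a)^\top$. Let $\phi_{\max}:=\max\|\phi(s,a)\|_2$, and define $V_\theta(s):=\max_a\phi(s,a)^\top\theta$.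 The distribution $d>0$ on $\mathcal S\times\mathcal A$ gives $D=\mathrm{diag}(d)$. The step size is $\alpha\in(0,1)$. Define $g(\theta):=\Phi^\top D(R+\gamma PV_\theta-\Phi\theta)$; a projected Bellman fixed point is a $\theta^\star$ with $g(\theta^\star)=0$. Define $A_\pi:=I-\alpha\Phi^\top D\Phi+\alpha\gamma\Phi^\top DP\Pi^\pi\Phi$, and let $\rho_\alpha^{\mathrm{dir}}$ be the joint spectral radius $\lim_k\max_{\pi_i\in\Theta}\|A_{\pi_k}\cdots A_{\pi_1}\|^{1/k}$. When $\rho_\alpha^{\mathrm{dir}}<1$, a unique projected Bellman fixed point exists. Lyapunov norm: define \[ V_\varepsilon^\infty(x):=\lim_{t\to\infty}\sum_{\ell=0}^t\beta_\varepsilon^{-2\ell}\max_{\pi_1,\dots,\pi_\ell\in\Theta}\|A_{\pi_\ell}\cdots A_{\pi_1}x\|_2^2, \] where the $\ell=0$ term is $\|x\|_2^2$, and $p_\varepsilon:=\sqrt{V_\varepsilon^\infty}$ (a norm). Let $C_\varepsilon\ge1$ satisfy $\|x\|_2^2\le V^\infty_\varepsilon(x)\le C_\varepsilon\|x\|_2^2$ for all $x$. i.i.d. sampling: $\theta_0$ is deterministic. At each time $k$, $(s_k,a_k)$ is drawn i.i.d. from $d$, $s'_k\sim P(\cdot\mid s_k,a_k)$, and $r_{k+1}=r(s_k,a_k,s'_k)$. The filtration is $\mathcal F_0=\sigma(\theta_0)$ and $\mathcal F_k=\sigma(\theta_0,\{(s_t,a_t,s'_t,r_{t+1}):t\le k-1\})$.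 Define $\widehat g_k(\theta):=\phi(s_k,a_k)(r_{k+1}+\gamma\max_u\phi(s'_k,u)^\top\theta-\phi(s_k,a_k)^\top\theta)$, the update $\theta_{k+1}=\theta_k+\alpha\widehat g_k(\theta_k)$, and $w_k:=\widehat g_k(\theta_k)-g(\theta_k)$. *)

(* Defs.v *)
From HB Require Import structures.
From mathcomp Require Import all_boot all_order all_algebra.
From mathcomp Require Import all_classical all_reals all_analysis.
Set Implicit Arguments. Unset Strict Implicit. Unset Printing Implicit Defensive.
Import Order.TTheory GRing.Theory Num.Theory.
Import numFieldNormedType.Exports.
Local Open Scope classical_set_scope.
Local Open Scope ring_scope.

Section Defs.
Context {R : realType}.

Definition vnorm2 n (x : 'cV[R]_n) : R := Num.sqrt (\sum_i (x i ord0) ^+ 2).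
Definition dotv n (u v : 'cV[R]_n) : R := \sum_i u i ord0 * v i ord0.

Definition opnorm n (M : 'M[R]_n) : R :=
  sup [set vnorm2 (M *m x) | x in [set x : 'cV[R]_n | vnorm2 x <= 1]].

(* States S = 'I_nS.+1, actions A = 'I_nA.+1 (finite, nonempty).
   phi s a : feature vector phi(s,a) (row (s,a) of Phi, as a column vector),
   P s a s' = P(s'|s,a), r s a s' = r(s,a,s'), d s a = d(s,a). *)
Variables (nS nA nF : nat).
Local Notation S := 'I_nS.+1.
Local Notation A := 'I_nA.+1.
Local Notation vec := 'cV[R]_nF.

Definition sample := (S * A * S)%type.
Definition policy := {ffun S -> A}.

Section Model.
Variables (P : S -> A -> S -> R) (r : S -> A -> S -> R) (gamma : R)
          (phi : S -> A -> vec) (d : S -> A -> R) (alpha : R).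

Definition Qval (th : vec) s a : R := dotv (phi s a) th.
Definition Vth (th : vec) (s : S) : R := \big[Num.max/Qval th s ord0]_(u : A) Qval th s u.
Definition Rexp s a : R := \sum_(s' : S) P s a s' * r s a s'.

(* g(theta) = Phi^T D (R + gamma P V_theta - Phi theta), written out entrywise
   over state-action pairs (D diagonal). *)
Definition gbar (th : vec) : vec :=
  \sum_(s : S) \sum_(a : A)
     (d s a * (Rexp s a + gamma * (\sum_(s' : S) P s a s' * Vth th s') - Qval th s a))
       *: phi s a.

(* A_pi = I - alpha Phi^T D Phi + alpha gamma Phi^T D P Pi^pi Phi, with
   (P Pi^pi Phi) row (s,a) = sum_s' P(s'|s,a) phi(s',pi(s'))^T. *)
Definition Api (pi : policy) : 'M[R]_nF :=
  1%:M
  - alpha *: (\sum_(s : S) \sum_(a : A) d s a *: (phi s a *m (phi s a)^T))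
  + (alpha * gamma) *: (\sum_(s : S) \sum_(a : A)
        d s a *: (phi s a *m (\sum_(s' : S) P s a s' *: phi s' (pi s'))^T)).

(* A_{pi_l} ... A_{pi_1} for the sequence [:: pi_1; ...; pi_l] *)
Definition prodA (ps : seq policy) : 'M[R]_nF :=
  foldr (fun pi M => M *m Api pi) 1%:M ps.

(* k-th term (k >= 1) of the joint spectral radius sequence:
   max_{pi_1..pi_k} ||A_{pi_k} ... A_{pi_1}||^{1/k}.  Indexed by k.+1. *)
Definition jsr_term (k : nat) : R :=
  \big[Num.max/0]_(ps : k.+1.-tuple policy) (opnorm (prodA ps) `^ (k.+1%:R)^-1).

Definition Vinf (beta : R) (x : vec) : R :=
  limn (fun t : nat => \sum_(0 <= l < t.+1)
     (beta ^- (2 * l) * \big[Num.max/0]_(ps : l.-tuple policy) (vnorm2 (prodA ps *m x)) ^+ 2)).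

Definition peps (beta : R) (x : vec) : R := Num.sqrt (Vinf beta x).

Definition Rmax : R := \big[Num.max/0]_(s : S) \big[Num.max/0]_(a : A)
                         \big[Num.max/0]_(s' : S) `|r s a s'|.
Definition phimax : R := \big[Num.max/0]_(s : S) \big[Num.max/0]_(a : A) vnorm2 (phi s a).
Definition Phi_infnorm (th : vec) : R :=
  \big[Num.max/0]_(s : S) \big[Num.max/0]_(a : A) `|Qval th s a|.

Definition ghat (smp : sample) (th : vec) : vec :=
  let: (s, a, s') := smp in
  (r s a s' + gamma * Vth th s' - Qval th s a) *: phi s a.

Definition step (th : vec) (smp : sample) : vec := th + alpha *: ghat smp th.
(* theta_k as a function of theta_0 and the first k samples *)
Definition traj (th0 : vec) (h : seq sample) : vec := foldl step th0 h.

(* probability of one sample (s_k,a_k,s'_k): d(s,a) P(s'|s,a); of a history: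
   product (i.i.d.). *)
Definition mu (smp : sample) : R := let: (s, a, s') := smp in d s a * P s a s'.
Definition prob (h : seq sample) : R := \prod_(x <- h) mu x.

(* Conditional expectation E[X | F_k] for a random variable X depending on the
   first k+1 samples, evaluated at the atom of F_k given by the first k samples h
   (F_k is generated by the finite partition into such atoms; theta_0 is
   deterministic and r_{t+1} is a function of (s_t,a_t,s'_t)). *)
Definition cond_exp (k : nat) (X : k.+1.-tuple sample -> R) (h : k.-tuple sample) : R :=
  (\sum_(om : k.+1.-tuple sample | take k om == val h) prob om * X om) / prob h.

Definition wk (th0 : vec) (k : nat) (om : k.+1.-tuple sample) : vec :=
  let thk := traj th0 (take k om) in ghat (tnth om ord_max) thk - gbar thk.

End Model.
End Defs.

(* Main.v *)
Require Import Defs.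
From HB Require Import structures.
From mathcomp Require Import all_boot all_order all_algebra.
From mathcomp Require Import all_classical all_reals all_analysis.
From mathcomp Require Import ring lra.
Import Order.TTheory GRing.Theory Num.Theory.
Import numFieldNormedType.Exports.
Local Open Scope classical_set_scope.
Local Open Scope ring_scope.


Section Norm.
Variables (R : realType) (n : nat).
Implicit Types u v : 'cV[R]_n.

Definition sq u : R := \sum_i (u i ord0) ^+ 2.
Lemma sq_ge0 u : 0 <= sq u.
Proof. by apply: sumr_ge0 => i _; rewrite sqr_ge0. Qed.
Lemma vnorm2_ge0 u : 0 <= vnorm2 u.
Proof. exact: sqrtr_ge0. Qed.
Lemma vnorm2_sq u : vnorm2 u ^+ 2 = sq u.
Proof. by rewrite /vnorm2 sqr_sqrtr // sq_ge0. Qed.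

Lemma cs_aux u v : dotv u v <= vnorm2 u * vnorm2 v.
Proof.
set a := vnorm2 u; set b := vnorm2 v.
have ha : 0 <= a by exact: vnorm2_ge0.
have hb : 0 <= b by exact: vnorm2_ge0.
have E : \sum_i (b * u i ord0 - a * v i ord0) ^+ 2
   = b ^+ 2 * sq u - 2 * (a * b) * dotv u v + a ^+ 2 * sq v.
  rewrite /sq /dotv !mulr_sumr -sumrB -big_split /=.
  by apply: eq_bigr => i _; ring.
have H0 : 0 <= \sum_i (b * u i ord0 - a * v i ord0) ^+ 2.
  by apply: sumr_ge0 => i _; rewrite sqr_ge0.
rewrite E -!vnorm2_sq -/a -/b in H0.
have [a0|apos] := eqVneq a 0.
  have su : sq u = 0 by rewrite -vnorm2_sq -/a a0 expr0n.
  have ui : forall i, u i ord0 = 0.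
    move=> i; apply/eqP; rewrite -sqrf_eq0; apply/eqP.
    move/eqP: su; rewrite psumr_eq0; last by move=> j _; rewrite sqr_ge0.
    by move/allP => /(_ i (mem_index_enum _)) /= /eqP.
  rewrite /dotv big1 ?a0 ?mul0r // => i _; by rewrite ui mul0r.
have [b0|bpos] := eqVneq b 0.
  have su : sq v = 0 by rewrite -vnorm2_sq -/b b0 expr0n.
  have ui : forall i, v i ord0 = 0.
    move=> i; apply/eqP; rewrite -sqrf_eq0; apply/eqP.
    move/eqP: su; rewrite psumr_eq0; last by move=> j _; rewrite sqr_ge0.
    by move/allP => /(_ i (mem_index_enum _)) /= /eqP.
  rewrite /dotv big1 ?b0 ?mulr0 // => i _; by rewrite ui mulr0.
have ab : 0 < a * b by rewrite mulr_gt0 // lt_neqAle eq_sym ?apos ?bpos.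
nra.
Qed.

Lemma dotvN u v : dotv (- u) v = - dotv u v.
Proof. by rewrite /dotv -sumrN; apply: eq_bigr => i _; rewrite !mxE mulNr. Qed.

Lemma vnorm2N u : vnorm2 (- u) = vnorm2 u.
Proof. by rewrite /vnorm2; congr Num.sqrt; apply: eq_bigr => i _; rewrite mxE sqrrN. Qed.

Lemma cs u v : `|dotv u v| <= vnorm2 u * vnorm2 v.
Proof.
rewrite ler_norml cs_aux andbT lerNl -dotvN.
by rewrite -(vnorm2N u) cs_aux.
Qed.

Lemma vnorm2D u v : vnorm2 (u + v) <= vnorm2 u + vnorm2 v.
Proof.
have h : sq (u + v) = sq u + 2 * dotv u v + sq v.
  rewrite /sq /dotv mulr_sumr -!big_split /=.
  by apply: eq_bigr => i _; rewrite mxE; ring.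
have := cs_aux u v.
have := vnorm2_ge0 (u + v); have := vnorm2_ge0 u; have := vnorm2_ge0 v.
have := vnorm2_sq (u + v); have := vnorm2_sq u; have := vnorm2_sq v.
rewrite h. nra.
Qed.

Lemma vnorm2Z c u : vnorm2 (c *: u) = `|c| * vnorm2 u.
Proof.
rewrite /vnorm2 -sqrtr_sqr -sqrtrM ?sqr_ge0 //; congr Num.sqrt.
by rewrite mulr_sumr; apply: eq_bigr => i _; rewrite mxE exprMn.
Qed.

Lemma vnorm2B u v : vnorm2 (u - v) <= vnorm2 u + vnorm2 v.
Proof. by rewrite -(vnorm2N v) vnorm2D. Qed.

Lemma vnorm2_sum (I : Type) (s : seq I) (F : I -> 'cV[R]_n) :
  vnorm2 (\sum_(i <- s) F i) <= \sum_(i <- s) vnorm2 (F i).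
Proof.
elim: s => [|x s IH]; first by rewrite !big_nil /vnorm2 /sq big1 ?sqrtr0 // => i _; rewrite mxE expr0n.
rewrite !big_cons; apply: le_trans (vnorm2D _ _) _; by rewrite lerD2l.
Qed.

Lemma dotvDr u v w : dotv u (v + w) = dotv u v + dotv u w.
Proof. by rewrite /dotv -big_split; apply: eq_bigr => i _; rewrite mxE mulrDr. Qed.
Lemma dotvBr u v w : dotv u (v - w) = dotv u v - dotv u w.
Proof. by rewrite /dotv -sumrB; apply: eq_bigr => i _; rewrite !mxE mulrBr. Qed.
End Norm.
Arguments sq_ge0 {R n}. Arguments vnorm2_ge0 {R n}. Arguments vnorm2_sq {R n}.
Arguments cs_aux {R n}. Arguments dotvN {R n}. Arguments vnorm2N {R n}.
Arguments cs {R n}. Arguments vnorm2D {R n}. Arguments vnorm2Z {R n}.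
Arguments vnorm2B {R n}. Arguments vnorm2_sum {R n I}. Arguments dotvDr {R n}.
Arguments dotvBr {R n}.


Section Model.
Context {R : realType} {nS nA nF : nat}.
Context {P : 'I_nS.+1 -> 'I_nA.+1 -> 'I_nS.+1 -> R}
  {r : 'I_nS.+1 -> 'I_nA.+1 -> 'I_nS.+1 -> R} {gamma : R}
  {phi : 'I_nS.+1 -> 'I_nA.+1 -> 'cV[R]_nF} {d : 'I_nS.+1 -> 'I_nA.+1 -> R}.
Hypothesis P0 : forall s a s', 0 <= P s a s'.
Hypothesis P1 : forall s a, \sum_(s' : 'I_nS.+1) P s a s' = 1.
Hypothesis g0 : 0 <= gamma.
Hypothesis d0 : forall s a, 0 <= d s a.
Hypothesis d1 : \sum_(s : 'I_nS.+1) \sum_(a : 'I_nA.+1) d s a = 1.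

Lemma Ninf_ge0 th : 0 <= Phi_infnorm phi th.
Proof. exact: bigmax_ge_id. Qed.
Lemma phimax_ge0 : 0 <= phimax phi.
Proof. exact: bigmax_ge_id. Qed.
Lemma Rmax_ge0 : 0 <= Rmax r.
Proof. exact: bigmax_ge_id. Qed.

Lemma Qabs th s a : `|Qval phi th s a| <= Phi_infnorm phi th.
Proof.
rewrite /Phi_infnorm; apply: (bigmax_sup s) => //.
by apply: (bigmax_sup a).
Qed.
Lemma phi_le s a : vnorm2 (phi s a) <= phimax phi.
Proof. rewrite /phimax; apply: (bigmax_sup s) => //; by apply: (bigmax_sup a). Qed.
Lemma r_le s a s' : `|r s a s'| <= Rmax r.
Proof.
rewrite /Rmax; apply: (bigmax_sup s) => //; apply: (bigmax_sup a) => //.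
by apply: (bigmax_sup s').
Qed.

Lemma Vabs th s : `|Vth phi th s| <= Phi_infnorm phi th.
Proof.
rewrite ler_norml; apply/andP; split.
  apply: le_trans (bigmax_ge_id _ _ _ _).
  by rewrite lerNl; apply: le_trans (Qabs th s ord0); rewrite -normrN ler_norm.
apply: bigmax_le => [|u _]; apply: le_trans (Qabs _ _ _); exact: ler_norm.
Qed.

Lemma Ninf_le th ths :
  Phi_infnorm phi th <= Phi_infnorm phi ths + phimax phi * vnorm2 (th - ths).
Proof.
apply: bigmax_le.
  by rewrite addr_ge0 ?Ninf_ge0 // mulr_ge0 ?phimax_ge0 ?vnorm2_ge0.
move=> s _; apply: bigmax_le.
  by rewrite addr_ge0 ?Ninf_ge0 // mulr_ge0 ?phimax_ge0 ?vnorm2_ge0.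
move=> a _.
have -> : Qval phi th s a = Qval phi ths s a + Qval phi (th - ths) s a.
  by rewrite /Qval dotvBr addrC subrK.
apply: (le_trans (ler_normD _ _)); apply: lerD; first exact: Qabs.
rewrite /Qval; apply: (le_trans (cs _ _)); apply: ler_wpM2r; first exact: vnorm2_ge0.
exact: phi_le.
Qed.

Lemma Rexp_abs s a : `|Rexp P r s a| <= Rmax r.
Proof.
rewrite /Rexp; apply: (le_trans (ler_norm_sum _ _ _)).
apply: le_trans (_ : \sum_s' P s a s' * Rmax r <= _).
  apply: ler_sum => s' _; rewrite normrM ger0_norm //.
  by apply: ler_wpM2l => //; exact: r_le.
by rewrite -mulr_suml P1 mul1r.
Qed.

Lemma PV_abs th s a : `|\sum_s' P s a s' * Vth phi th s'| <= Phi_infnorm phi th.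
Proof.
apply: (le_trans (ler_norm_sum _ _ _)).
apply: le_trans (_ : \sum_s' P s a s' * Phi_infnorm phi th <= _).
  apply: ler_sum => s' _; rewrite normrM ger0_norm //.
  by apply: ler_wpM2l => //; exact: Vabs.
by rewrite -mulr_suml P1 mul1r.
Qed.

Definition Kb th := phimax phi * (Rmax r + (1 + gamma) * Phi_infnorm phi th).

Lemma ghat_le smp th : vnorm2 (ghat r gamma phi smp th) <= Kb th.
Proof.
case: smp => [[s a] s'] /=; rewrite vnorm2Z /Kb mulrC.
apply: ler_pM; rewrite ?normr_ge0 ?vnorm2_ge0 ?phi_le //.
apply: (le_trans (ler_normB _ _)).
have -> : Rmax r + (1 + gamma) * Phi_infnorm phi th = Rmax r + gamma * Phi_infnorm phi th + Phi_infnorm phi th by ring.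
apply: lerD; last exact: Qabs.
apply: (le_trans (ler_normD _ _)); apply: lerD; first exact: r_le.
rewrite normrM ger0_norm //; apply: ler_wpM2l => //; exact: Vabs.
Qed.

Lemma gbar_le th : vnorm2 (gbar P r gamma phi d th) <= Kb th.
Proof.
have E : \sum_s \sum_a d s a * Kb th = Kb th.
  under eq_bigr do rewrite -mulr_suml.
  by rewrite -mulr_suml d1 mul1r.
rewrite /gbar; apply: (le_trans (vnorm2_sum _ _)).
apply: (@le_trans _ _ (\sum_s \sum_a d s a * Kb th)); last by rewrite E.
apply: ler_sum => s _; apply: (le_trans (vnorm2_sum _ _)).
apply: ler_sum => a _; rewrite vnorm2Z normrM ger0_norm // -mulrA.
apply: ler_wpM2l => //; rewrite /Kb mulrC.
apply: ler_pM; rewrite ?normr_ge0 ?vnorm2_ge0 ?phi_le //.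
apply: (le_trans (ler_normB _ _)).
have -> : Rmax r + (1 + gamma) * Phi_infnorm phi th = Rmax r + gamma * Phi_infnorm phi th + Phi_infnorm phi th by ring.
apply: lerD; last exact: Qabs.
apply: (le_trans (ler_normD _ _)); apply: lerD; first exact: Rexp_abs.
rewrite normrM ger0_norm //; apply: ler_wpM2l => //; exact: PV_abs.
Qed.

End Model.


Lemma take_last_eq (T : eqType) k (h : k.-tuple T) x (om : k.+1.-tuple T) :
  ((take k om == h) && (tnth om ord_max == x)) = (om == rcons_tuple h x).
Proof.
apply/idP/idP.
  case/andP => /eqP ht /eqP hx; apply/eqP; apply: val_inj => /=.
  have sz : size om = k.+1 by rewrite size_tuple.
  rewrite -[LHS](take_size) sz (take_nth x) ?sz // ht; congr rcons.
  by rewrite (tnth_nth x) in hx.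
move/eqP => ->; apply/andP; split.
  by rewrite /= -cats1 take_size_cat ?size_tuple.
by rewrite (tnth_nth x) /= nth_rcons size_tuple ltnn eqxx.
Qed.

Lemma sum_mu {R : realType} {nS nA} {P : 'I_nS.+1 -> 'I_nA.+1 -> 'I_nS.+1 -> R}
  {d : 'I_nS.+1 -> 'I_nA.+1 -> R} :
  (forall s a, \sum_(s' : 'I_nS.+1) P s a s' = 1) ->
  \sum_(s : 'I_nS.+1) \sum_(a : 'I_nA.+1) d s a = 1 ->
  \sum_(x : sample nS nA) mu P d x = 1.
Proof.
move=> P1 d1.
rewrite (eq_bigr (fun p : sample nS nA => (fun q s' => d q.1 q.2 * P q.1 q.2 s') p.1 p.2)); last by case=> [[s a] s'].
rewrite -(pair_big predT predT (fun q s' => d q.1 q.2 * P q.1 q.2 s')) /=.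
rewrite (eq_bigr (fun q : 'I_nS.+1 * 'I_nA.+1 => (fun s a => d s a) q.1 q.2)); last first.
  by case=> s a _ /=; rewrite -mulr_sumr P1 mulr1.
by rewrite -(pair_big predT predT (fun s a => d s a)).
Qed.

Lemma sum_prob (R : realType) nS nA (P : 'I_nS.+1 -> 'I_nA.+1 -> 'I_nS.+1 -> R)
  (d : 'I_nS.+1 -> 'I_nA.+1 -> R) k (h : k.-tuple (sample nS nA)) :
  \sum_(x : sample nS nA) mu P d x = 1 ->
  \sum_(om : k.+1.-tuple (sample nS nA) | take k om == h) prob P d om = prob P d h.
Proof.
move=> H1.
rewrite (partition_big (fun om : k.+1.-tuple (sample nS nA) => tnth om ord_max) predT) //=.
rewrite (eq_bigr (fun x => prob P d h * mu P d x)); last first.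
  move=> x _; rewrite (big_pred1 (rcons_tuple h x)); last by move=> om; exact: take_last_eq.
  by rewrite /prob /= big_rcons.
by rewrite -mulr_sumr H1 mulr1.
Qed.

Theorem lemma5 (R : realType) (nS nA nF : nat)
  (P : 'I_nS.+1 -> 'I_nA.+1 -> 'I_nS.+1 -> R)
  (r : 'I_nS.+1 -> 'I_nA.+1 -> 'I_nS.+1 -> R) (gamma : R)
  (phi : 'I_nS.+1 -> 'I_nA.+1 -> 'cV[R]_nF) (d : 'I_nS.+1 -> 'I_nA.+1 -> R)
  (alpha : R) (theta0 thstar : 'cV[R]_nF) (rho eps C : R) :
  (forall s a s', 0 <= P s a s') ->
  (forall s a, \sum_(s' : 'I_nS.+1) P s a s' = 1) ->
  0 < gamma < 1 ->
  (* Phi has full column rank: Phi theta = 0 -> theta = 0 *)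
  (forall th : 'cV[R]_nF, (forall s a, Qval phi th s a = 0) -> th = 0) ->
  (forall s a, 0 < d s a) ->
  \sum_(s : 'I_nS.+1) \sum_(a : 'I_nA.+1) d s a = 1 ->
  0 < alpha < 1 ->
  (* rho = rho_alpha^dir, the joint spectral radius, and rho < 1 *)
  jsr_term P gamma phi d alpha @ \oo --> rho ->
  rho < 1 ->
  (* thstar is the projected Bellman fixed point *)
  gbar P r gamma phi d thstar = 0 ->
  0 < eps -> rho + eps < 1 ->
  1 <= C ->
  (forall x : 'cV[R]_nF,
      vnorm2 x ^+ 2 <= Vinf P gamma phi d alpha (rho + eps) x <= C * vnorm2 x ^+ 2) ->
  forall (k : nat) (h : k.-tuple (sample nS nA)),
    0 < prob P d h ->
    cond_exp P d
      (fun om => peps P gamma phi d alpha (rho + eps) (wk P r gamma phi d alpha theta0 om)) h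
    <= 2 * Num.sqrt C * phimax phi
          * (Rmax r + (1 + gamma) * Phi_infnorm phi thstar)
       + 2 * Num.sqrt C * (1 + gamma) * phimax phi ^+ 2
          * peps P gamma phi d alpha (rho + eps) (traj r gamma phi alpha theta0 h - thstar).
Proof.
move=> P0 P1 /andP[g0 g1] _ dpos d1 _ _ _ _ _ _ C1 HV k h hp.
have d0 : forall s a, 0 <= d s a by move=> s a; exact: ltW.
have g0' : 0 <= gamma by exact: ltW.
have Hmu := sum_mu (d:=d) P1 d1.
set B := (X in _ <= X).
set ths := thstar.
set peps' := peps P gamma phi d alpha (rho + eps).
have sC : 0 <= Num.sqrt C by exact: sqrtr_ge0.
have pge : forall x, vnorm2 x <= peps' x.
  move=> x; rewrite /peps' /peps.
  have [h1 _] := andP (HV x).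
  apply: le_trans (ler_wsqrtr h1).
  by rewrite sqrtr_sqr ger0_norm ?vnorm2_ge0.
have ple : forall x, peps' x <= Num.sqrt C * vnorm2 x.
  move=> x; rewrite /peps' /peps.
  have [_ h2] := andP (HV x).
  apply: (le_trans (ler_wsqrtr h2)).
  by rewrite sqrtrM ?sqrtr_sqr ?ger0_norm ?vnorm2_ge0 //; lra.
pose K := @Kb R nS nA nF r gamma phi.
have Nge := Ninf_ge0 (phi:=phi) ths.
have pmg := phimax_ge0 (phi:=phi).
have Rmg := Rmax_ge0 (r:=r).
have key : forall om : k.+1.-tuple (sample nS nA), take k om = h ->
    peps' (wk P r gamma phi d alpha theta0 om) <= B.
  move=> om hom; rewrite /wk hom.
  set thk := traj r gamma phi alpha theta0 h.
  set x := vnorm2 (thk - ths).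
  have xp : x <= peps' (thk - ths) by exact: pge.
  have x0 : 0 <= x by exact: vnorm2_ge0.
  have hw : vnorm2 (ghat r gamma phi (tnth om ord_max) thk - gbar P r gamma phi d thk) <= 2 * K thk.
    apply: (le_trans (vnorm2B _ _)); rewrite mulr2n mulrDl mul1r.
    by apply: lerD; [exact: ghat_le | exact: gbar_le].
  have hN := Ninf_le (phi:=phi) thk ths.
  have hK : K thk <= phimax phi * (Rmax r + (1 + gamma) * Phi_infnorm phi ths)
                    + (1 + gamma) * phimax phi ^+ 2 * x.
    rewrite /K /Kb.
    have : phimax phi * ((1 + gamma) * Phi_infnorm phi thk) <=
           phimax phi * ((1 + gamma) * (Phi_infnorm phi ths + phimax phi * x)).
      apply: ler_wpM2l => //; apply: ler_wpM2l => //; lra.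
    rewrite /x; lra.
  apply: (le_trans (ple _)).
  have h1 : Num.sqrt C * vnorm2 (ghat r gamma phi (tnth om ord_max) thk - gbar P r gamma phi d thk)
      <= Num.sqrt C * (2 * (phimax phi * (Rmax r + (1 + gamma) * Phi_infnorm phi ths)
                    + (1 + gamma) * phimax phi ^+ 2 * x)).
    apply: ler_wpM2l => //; apply: (le_trans hw); lra.
  apply: (le_trans h1); rewrite /B -/peps' -/ths.
  have : (1 + gamma) * phimax phi ^+ 2 * x <= (1 + gamma) * phimax phi ^+ 2 * peps' (thk - ths).
    apply: ler_wpM2l => //; apply: mulr_ge0; [lra | exact: sqr_ge0].
  move=> hx.
  have : Num.sqrt C * ((1 + gamma) * phimax phi ^+ 2 * x) <= Num.sqrt C * ((1 + gamma) * phimax phi ^+ 2 * peps' (thk - ths)).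
    exact: ler_wpM2l.
  lra.
rewrite /cond_exp ler_pdivrMr // -(@sum_prob _ _ _ P d k h Hmu) mulr_sumr.
apply: ler_sum => om /eqP hom.
rewrite mulrC; apply: ler_wpM2r; last exact: key.
by apply: prodr_ge0 => -[[s a] s'] _ /=; apply: mulr_ge0.
Qed.
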